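(* Let $G$ be a finite graph (multiple edges and self-loops allowed) with $I$ edges, $V$ vertices and $c$ connected components, and let $L=I-V+c$. Then there exist an orientation of the edges of $G$ and $L$ simple cycles $\gamma_1,\ldots,\gamma_L$ of $G$ with the following properties: - each $\gamma_j$ is a directed (oriented) cycle with respect to this orientation; - the edge-indicator vectors of $\gamma_1,\dots,\gamma_L$ in $\mathbb{R}^I$ are linearly independent. Consequently, assigning to each edge $\ell_i$ the ''energy'' $E_i=\sum_{j=1}^L a_{ij}e_j$ with $a_{ij}=1$ if $\ell_i\in\gamma_j$ and $a_{ij}=0$ otherwise, where $e_1,\dots,e_L$ are free real parameters (loop energies), gives the following parametrization. Every energy flow conserved at each vertex (total energy flowing in equals total energy flowing out, with zero external energies) is of this form. In this parametrization each leg's energy is a linear combination of $e_1,\dots,e_L$ with coefficients $0$ or $1$, and the flow of each $e_j$ runs along the oriented minimal loop $\gamma_j$.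
   Context: A simple cycle in a graph is a closed sequence of distinct edges through distinct vertices; a self-loop is a simple cycle of length one. A cycle is directed (oriented) with respect to an orientation of the edges if all its edges have coherent orientations along the cycle: at each shared vertex, one edge points into the vertex and the next points out of it. *)

(* Defs.v *)
From HB Require Import structures.
From mathcomp Require Import all_boot all_order all_algebra.
Set Implicit Arguments. Unset Strict Implicit. Unset Printing Implicit Defensive.
Import Order.TTheory GRing.Theory Num.Theory.

(* A finite multigraph: vertex type V, edge type E (both finite), and
   ends : E -> V * V giving the two (unordered) endpoints of each edge;
   a self-loop is an edge e with (ends e).1 = (ends e).2.
   The pair order in [ends e] carries no meaning for the graph itself. *)

Section Graph.
Variables (V E : finType) (ends : E -> V * V).

Definition adj : rel V :=
  fun u v => [exists e, (ends e == (u, v)) || (ends e == (v, u))].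

Definition ncomp : nat := n_comp adj [pred x : V | true].

Definition osrc (o : E -> bool) (e : E) : V := if o e then (ends e).1 else (ends e).2.
Definition otgt (o : E -> bool) (e : E) : V := if o e then (ends e).2 else (ends e).1.

Definition cyc_steps (es : seq E) (vs : seq V) : seq (E * (V * V)) :=
  zip es (zip vs (rot 1 vs)).

(* A simple cycle: a closed sequence of k >= 1 distinct edges es through
   k distinct vertices vs, edge e_i joining v_i and v_(i+1 mod k)
   (k = 1 is a self-loop). *)
Definition simple_cycle (es : seq E) (vs : seq V) : Prop :=
  [/\ 0 < size es, size vs = size es, uniq es, uniq vs &
      all (fun t : E * (V * V) =>
             (ends t.1 == (t.2.1, t.2.2)) || (ends t.1 == (t.2.2, t.2.1)))
          (cyc_steps es vs)].

Definition directed_cycle (o : E -> bool) (es : seq E) (vs : seq V) : Prop :=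
  all (fun t : E * (V * V) => (osrc o t.1 == t.2.1) && (otgt o t.1 == t.2.2))
      (cyc_steps es vs).

Definition conserved (R : nmodType) (o : E -> bool) (f : E -> R) : Prop :=
  forall v : V, (\sum_(e | otgt o e == v) f e)%R = (\sum_(e | osrc o e == v) f e)%R.
End Graph.

(* Main.v *)
Require Import Defs.
From HB Require Import structures.
From mathcomp Require Import all_boot all_order all_algebra.
From mathcomp Require Import zify.
Import Order.TTheory GRing.Theory Num.Theory.

Set Implicit Arguments. Unset Strict Implicit. Unset Printing Implicit Defensive.

Section Forest.
Variables (V E : finType) (ends : E -> V * V).

Local Notation adj := (adj ends).

Lemma adj_sym : symmetric adj.
Proof.
move=> u v; apply/existsP/existsP => -[e He]; exists e; by rewrite orbC.
Qed.

Definition valid (p : V -> V) (d : V -> nat) : Prop :=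
  forall v, if d v == 0 then p v = v else (d v = (d (p v)).+1 /\ adj v (p v)).

Definition desc (p : V -> V) (d : V -> nat) (y w : V) : bool :=
  (d y <= d w) && (iter (d w - d y) p w == y).

Section Valid.
Variables (p : V -> V) (d : V -> nat).
Hypothesis Hv : valid p d.

Lemma dpS v : 0 < d v -> d v = (d (p v)).+1.
Proof. move=> h; move: (Hv v); case: eqP => [|_ []//]; lia. Qed.

Lemma adjp v : 0 < d v -> adj v (p v).
Proof. move=> h; move: (Hv v); case: eqP => [|_ []//]; lia. Qed.

Lemma p0 v : d v = 0 -> p v = v.
Proof. move=> h; move: (Hv v); by rewrite h. Qed.

Lemma d_iter k v : d (iter k p v) = d v - k.
Proof.
elim: k => [|k IH]; first by rewrite subn0.
rewrite iterS; case: (posnP (d (iter k p v))) => h.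
  rewrite p0 //; lia.
move: (dpS h); lia.
Qed.

Lemma desc_refl y : desc p d y y.
Proof. by rewrite /desc leqnn subnn /=. Qed.

Lemma desc_le y w : desc p d y w -> d y <= d w.
Proof. by case/andP. Qed.

Lemma desc_eqd y w : desc p d y w -> d y = d w -> y = w.
Proof. by move=> /andP[_ /eqP Ey] h; rewrite -Ey h subnn. Qed.

Lemma desc_rec y w : 0 < d w -> desc p d y w = (w == y) || desc p d y (p w).
Proof.
move=> h; have E1 := dpS h; rewrite /desc E1.
case: (leqP (d y) (d (p w))) => h2.
  have -> : (d (p w)).+1 - d y = (d (p w) - d y).+1 by lia.
  rewrite iterSr /= (_ : d y <= (d (p w)).+1) /=; last lia.
  case: (eqVneq w y) => [wy|//]; rewrite wy in h2 E1; lia.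
case: (eqVneq (d y) (d (p w)).+1) => h3.
  by rewrite h3 subnn /= leqnn /= orbF.
have -> : (d y <= (d (p w)).+1) = false by lia.
rewrite /= orbF; apply/esym/eqP => wy; move: h3 E1; rewrite wy => /eqP h3 E1; exact: h3 E1.
Qed.

Lemma desc_iter y w : desc p d y w -> iter (d w - d y) p w = y.
Proof. by case/andP => _ /eqP. Qed.

Lemma d_lt v : d v < #|V|.
Proof.
pose f (k : 'I_(d v).+1) := iter k p v.
have inj : injective f.
  move=> i j; rewrite /f => /(congr1 d); rewrite !d_iter => h.
  apply: val_inj => /=; move: (ltn_ord i) (ltn_ord j); lia.
by have := leq_card f inj; rewrite card_ord.
Qed.

Definition troot v := iter (d v) p v.

Lemma d_troot v : d (troot v) = 0.
Proof. by rewrite /troot d_iter subnn. Qed.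

Lemma desc_troot y w : desc p d y w -> troot y = troot w.
Proof.
move=> h; rewrite /troot -[in RHS](subnKC (desc_le h)) iterD.
by rewrite (desc_iter h).
Qed.

End Valid.

Section Modif.
Variables (p : V -> V) (d : V -> nat) (x y : V).
Hypotheses (Hv : valid p d) (Hxy : adj x y) (Hnd : ~~ desc p d y x) (Hle : d y <= d x).

Definition p' w := if w == y then x else p w.
Definition d' w := if desc p d y w then d w - d y + d x + 1 else d w.

Lemma valid' : valid p' d'.
Proof.
move=> w; rewrite /p' /d'.
case: (eqVneq w y) => [->|wy].
  rewrite desc_refl (negbTE Hnd); have -> : (d y - d y + d x + 1 == 0) = false by lia.
  split; first lia. by rewrite adj_sym.
case: (boolP (desc p d y w)) => dw.
  have h1 := desc_le dw.
  have h2 : d y < d w by rewrite ltn_neqAle h1 andbT; apply/eqP => /(desc_eqd dw) Ey; rewrite Ey eqxx in wy.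
  have h0 : 0 < d w by lia.
  have dpw : desc p d y (p w) by move: dw; rewrite desc_rec // (negbTE wy).
  rewrite dpw; have := dpS Hv h0; have := desc_le dpw.
  have -> : (d w - d y + d x + 1 == 0) = false by lia.
  move=> h3 h4; split; first lia. exact: (adjp Hv h0).
case: eqP => h0; first exact: (p0 Hv).
have h0' : 0 < d w by lia.
have dpw : ~~ desc p d y (p w) by move: dw; rewrite desc_rec // (negbTE wy).
rewrite (negbTE dpw); split; [exact: (dpS Hv) | exact: (adjp Hv)].
Qed.

Lemma sum' : \sum_v d v < \sum_v d' v.
Proof.
rewrite (bigD1 y) //= [X in _ < X](bigD1 y) //=.
rewrite -addSn; apply: leq_add.
  rewrite /d' desc_refl; lia.
apply: leq_sum => w _; rewrite /d'; case: ifP => // /desc_le; lia.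
Qed.
End Modif.

Definition normalb p d := [forall e, desc p d (ends e).1 (ends e).2 || desc p d (ends e).2 (ends e).1].

Lemma sum_bound p d : valid p d -> \sum_v d v <= #|V| * #|V|.
Proof.
move=> Hv; apply: leq_trans (_ : \sum_(v : V) #|V| <= _).
  by apply: leq_sum => v _; apply: ltnW; exact: (d_lt Hv).
by rewrite sum_nat_const.
Qed.

Lemma improve p d : valid p d -> ~~ normalb p d ->
  exists p2 d2, valid p2 d2 /\ \sum_v d v < \sum_v d2 v.
Proof.
move=> Hv /forallPn [e]; rewrite negb_or => /andP [h1 h2].
have axy : adj (ends e).1 (ends e).2.
  by apply/existsP; exists e; rewrite -surjective_pairing eqxx.
case: (leqP (d (ends e).2) (d (ends e).1)) => hle.
  exists (p' p (ends e).1 (ends e).2), (d' p d (ends e).1 (ends e).2).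
  split; [exact: valid' Hv axy h2 hle | exact: sum'].
exists (p' p (ends e).2 (ends e).1), (d' p d (ends e).2 (ends e).1).
split; first by apply: valid' Hv _ h1 (ltnW hle); rewrite adj_sym.
by apply: sum' _ h1 (ltnW hle); rewrite adj_sym.
Qed.

Lemma exists_normal : exists p d, valid p d /\ normalb p d.
Proof.
suff: forall n p d, valid p d -> #|V| * #|V| - \sum_v d v <= n -> exists p d, valid p d /\ normalb p d.
  move=> h; apply: (h _ id (fun _ => 0)) => //.
elim=> [|n IH] p d Hv Hn.
  case: (boolP (normalb p d)) => hn; first by exists p, d.
  have [p2 [d2 [Hv2 Hs]]] := improve Hv hn.
  have := sum_bound Hv2; lia.
case: (boolP (normalb p d)) => hn; first by exists p, d.
have [p2 [d2 [Hv2 Hs]]] := improve Hv hn.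
apply: (IH p2 d2 Hv2); have := sum_bound Hv2; lia.
Qed.

Lemma mkseqS0 (T : Type) (f : nat -> T) k : mkseq f k.+1 = f 0 :: mkseq (fun i => f i.+1) k.
Proof. by rewrite /mkseq /= (iotaDl 1 0) -map_comp. Qed.

Lemma joins_o o e : (ends e == (osrc ends o e, otgt ends o e)) || (ends e == (otgt ends o e, osrc ends o e)).
Proof. by rewrite /osrc /otgt; case: (o e); rewrite -surjective_pairing eqxx ?orbT. Qed.

Lemma sum_ind (R : pzSemiRingType) (P : pred E) (s : seq E) : uniq s ->
  (\sum_(e | P e) (if e \in s then 1 else 0 : R) = (count P s)%:R)%R.
Proof.
move=> us; rewrite -big_mkcondr sumr_const.
rewrite -size_filter -(card_uniqP _); last exact: filter_uniq.
congr (GRing.natmul _ _); apply: eq_card => x; by rewrite mem_filter.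
Qed.

Lemma cyc_conserved (R : pzSemiRingType) o es vs : simple_cycle ends es vs ->
  directed_cycle ends o es vs ->
  conserved ends o (fun e => if e \in es then 1%R else 0%R : R).
Proof.
move=> [_ hsz hu _ _] /allP hd v; rewrite !sum_ind //; congr (GRing.natmul _ _).
set S := cyc_steps es vs.
have h1 : es = unzip1 S.
  by rewrite /S /cyc_steps unzip1_zip // size_zip size_rot minnn hsz.
have h2 : unzip2 S = zip vs (rot 1 vs).
  by rewrite /S /cyc_steps unzip2_zip // size_zip size_rot minnn hsz.
rewrite h1 !count_map.
transitivity (count (pred1 v) (rot 1 vs)).
  have h3 : unzip2 (unzip2 S) = rot 1 vs by rewrite h2 unzip2_zip // size_rot.
  rewrite -h3 !count_map; apply: eq_in_count => t /hd /andP [_ /eqP h].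
  by rewrite /= h.
transitivity (count (pred1 v) vs).
  by apply/permP; rewrite perm_rot.
have h3 : unzip1 (unzip2 S) = vs by rewrite h2 unzip1_zip // size_rot.
rewrite -h3 !count_map; apply: eq_in_count => t /hd /andP [/eqP h _].
by rewrite /= h.
Qed.

Section Normal.
Variables (p : V -> V) (d : V -> nat).
Hypotheses (Hv : valid p d) (Hn : normalb p d).

Definition pe v : option E := [pick e | (ends e == (v, p v)) || (ends e == (p v, v))].

Lemma pe_spec v : 0 < d v -> exists t, pe v = Some t /\ ((ends t == (v, p v)) || (ends t == (p v, v))).
Proof.
move=> h; have := adjp Hv h; rewrite /Defs.adj => /existsP [e he].
rewrite /pe; case: pickP => [t ht|/(_ e)]; first by exists t.
by rewrite he.
Qed.

Definition istree e := [exists v, (0 < d v) && (pe v == Some e)].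

Definition o e := if istree e then d (ends e).2 < d (ends e).1 else d (ends e).1 <= d (ends e).2.

Lemma pe_inj u v : 0 < d u -> 0 < d v -> pe u = pe v -> u = v.
Proof.
move=> hu hv; have [t [-> ht]] := pe_spec hu; have [t' [-> ht']] := pe_spec hv.
case=> Et; subst t'.
have du := dpS Hv hu; have dv := dpS Hv hv.
case/orP: ht => /eqP h1; case/orP: ht' => /eqP; rewrite h1 => -[e1 e2] //; exfalso.
  by move: du dv; rewrite e2 -e1; lia.
by move: du dv; rewrite e1 -e2; lia.
Qed.


Lemma tree_dir v t : 0 < d v -> pe v = Some t -> osrc ends o t = v /\ otgt ends o t = p v.
Proof.
move=> hv hpe; have [t' [ht' hj]] := pe_spec hv; rewrite hpe in ht'; case: ht' => Et; subst t'.
have tr : istree t by apply/existsP; exists v; rewrite hv hpe eqxx.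
have dv := dpS Hv hv.
rewrite /osrc /otgt /o tr; case/orP: hj => /eqP -> /=.
  by rewrite dv ltnSn.
by rewrite dv ltnNge leqnSn.
Qed.

Lemma nontree_dir e : ~~ istree e -> desc p d (osrc ends o e) (otgt ends o e).
Proof.
move=> nt; move/forallP: Hn => /(_ e) hn.
rewrite /osrc /otgt /o (negbTE nt); case: ifP => hle.
  case/orP: hn => // h2; have := desc_le h2 => h3.
  have := desc_eqd h2; rewrite (_ : d (ends e).2 = d (ends e).1); last lia.
  by move=> /(_ erefl) ->; exact: desc_refl.
case/orP: hn => // h2; have := desc_le h2; lia.
Qed.

Section Cycle.
Variable e : E.
Hypothesis nt : ~~ istree e.
Let a := osrc ends o e.
Let w := otgt ends o e.
Let k := d w - d a.
Let P i := iter i p w.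
Let te v := odflt e (pe v).

Definition cyc_es := e :: mkseq (fun i => te (P i)) k.
Definition cyc_vs := P k :: mkseq P k.

Lemma Pk : P k = a.
Proof. exact: desc_iter (nontree_dir nt). Qed.

Lemma dP i : d (P i) = d w - i.
Proof. exact: d_iter. Qed.

Lemma P_pos i : i < k -> 0 < d (P i).
Proof. rewrite dP /k => h; lia. Qed.

Lemma te_spec i : i < k -> pe (P i) = Some (te (P i)).
Proof. by move=> h; have [t [ht _]] := pe_spec (P_pos h); rewrite /te ht. Qed.

Lemma te_tree i : i < k -> istree (te (P i)).
Proof. move=> h; apply/existsP; exists (P i); by rewrite P_pos // te_spec // eqxx. Qed.

Lemma steps_eq : cyc_steps cyc_es cyc_vs =
  (e, (a, w)) :: mkseq (fun i => (te (P i), (P i, P i.+1))) k.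
Proof.
rewrite /cyc_steps /cyc_es /cyc_vs rot1_cons -mkseqS mkseqS0 Pk /=.
by rewrite /mkseq !zip_map.
Qed.

Lemma cyc_directed : directed_cycle ends o cyc_es cyc_vs.
Proof.
rewrite /directed_cycle steps_eq /= -/a -/w !eqxx /= /mkseq all_map.
apply/allP => i; rewrite mem_iota add0n /= => hi.
have [-> ->] := tree_dir (P_pos hi) (te_spec hi).
by rewrite !eqxx.
Qed.

Lemma cyc_mem_nt e' : ~~ istree e' -> (e' \in cyc_es) = (e' == e).
Proof.
move=> nt'; rewrite inE; case: eqP => //= _.
apply/negP => /mapP [i]; rewrite mem_iota add0n /= => hi Ee; subst e'.
by rewrite te_tree in nt'.
Qed.

Lemma cyc_simple : simple_cycle ends cyc_es cyc_vs.
Proof.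
split.
- by [].
- by rewrite /= !size_mkseq.
- rewrite /cyc_es cons_uniq; apply/andP; split.
    apply/negP => /mapP [i]; rewrite mem_iota add0n /= => hi Ee.
    by move: nt; rewrite Ee te_tree.
  apply/mkseq_uniqP => i j hi hj Eij; move: (congr1 Some Eij).
  rewrite -te_spec // -te_spec // => /pe_inj.
  move=> /(_ (P_pos hi) (P_pos hj)) /(congr1 d); rewrite !dP /k => h.
  have := desc_le (nontree_dir nt); rewrite -/a -/w => h2; have hi2 : i < k := hi; have hj2 : j < k := hj; lia.
- rewrite /cyc_vs cons_uniq; apply/andP; split.
    apply/negP => /mapP [i]; rewrite mem_iota add0n /= => hi /(congr1 d).
    rewrite !dP /k => h; have := desc_le (nontree_dir nt); rewrite -/a -/w => h2; lia.
  apply/mkseq_uniqP => i j hi hj /(congr1 d).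
  rewrite !dP /k => h; have := desc_le (nontree_dir nt); rewrite -/a -/w => h2.
  have hi2 : i < k := hi; have hj2 : j < k := hj; lia.
- have := cyc_directed; rewrite /directed_cycle => /allP h.
  apply/allP => t /h /andP [/eqP <- /eqP <-]; exact: joins_o.
Qed.
End Cycle.

Lemma flow_zero (R : nmodType) (g : E -> R) : conserved ends o g ->
  (forall e, ~~ istree e -> g e = 0%R) -> forall e, g e = 0%R.
Proof.
move=> Hc Hnt.
have main : forall n v, #|V| - d v <= n -> 0 < d v -> forall t, pe v = Some t -> g t = 0%R.
  elim=> [|n IH] v hn hv t ht.
    have := d_lt Hv v; lia.
  have := Hc v; rewrite big1.
    rewrite (bigD1 t) /=; last by have [-> _] := tree_dir hv ht.
    rewrite big1 ?GRing.addr0 //.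
    move=> e /andP [/eqP he ne]; case: (boolP (istree e)) => te; last exact: Hnt.
    case/existsP: te => u /andP [hu /eqP hpu].
    have [hs _] := tree_dir hu hpu; rewrite hs in he; subst u.
    by rewrite he ht in hpu; case: hpu => Et; rewrite Et eqxx in ne.
  move=> e /eqP he; case: (boolP (istree e)) => te; last exact: Hnt.
  case/existsP: te => u /andP [hu /eqP hpu].
  have [_ ht2] := tree_dir hu hpu; rewrite ht2 in he.
  apply: (IH u _ hu e hpu); have := dpS Hv hu; rewrite he; lia.
move=> e; case: (boolP (istree e)) => te; last exact: Hnt.
case/existsP: te => u /andP [hu /eqP hpu].
by apply: (main #|V| u) hu e hpu; lia.
Qed.

Definition Tset := [set e | istree e].
Definition NRset := [set v | 0 < d v].

Lemma card_T : #|Tset| = #|NRset|.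
Proof.
rewrite -(card_imset _ (@Some_inj _)) -(card_in_imset (f := pe)); last first.
  by move=> u v; rewrite !inE; exact: pe_inj.
suff -> : [set Some x | x in Tset] = [set pe x | x in NRset] by [].
apply/setP => -[x|]; apply/imsetP/imsetP.
- case=> y; rewrite inE => /existsP [v /andP [hv /eqP hpe]] [->].
  by exists v; rewrite ?inE.
- case=> v; rewrite inE => hv hpe; exists x => //; rewrite inE.
  by apply/existsP; exists v; rewrite hv -hpe eqxx.
- by case.
- case=> v; rewrite inE => hv; have [t [-> _]] := pe_spec hv; by [].
Qed.

Lemma adj_troot x y : adj x y -> troot p d x = troot p d y.
Proof.
case/existsP => e he; move/forallP: Hn => /(_ e).
case/orP: he => /eqP -> ; case/orP => /desc_troot /= h; by rewrite h.
Qed.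

Lemma connect_troot x y : connect adj x y -> troot p d x = troot p d y.
Proof.
case/connectP => s; elim: s x => [|z s IH] x /=; first by move=> _ ->.
by case/andP => /adj_troot -> /IH.
Qed.

Lemma troot_connect x : connect adj x (troot p d x).
Proof.
move: {2}(d x) (erefl (d x)) => n; elim: n x => [|n IH] x hx.
  by rewrite /troot hx connect0.
have hx0 : 0 < d x by rewrite hx.
apply: connect_trans (connect1 (adjp Hv hx0)) _.
have := dpS Hv hx0; rewrite hx => -[hpx].
have := IH (p x) (esym hpx); by rewrite /troot -hpx hx iterSr.
Qed.

Definition RTset := [set v | d v == 0].

Lemma card_RT : #|RTset| = ncomp ends.
Proof.
have csym : connect_sym adj := sym_connect_sym adj_sym.
have troot_id r : d r = 0 -> troot p d r = r by move=> h; rewrite /troot h.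
transitivity #|[set x | fingraph.roots adj x]|; last first.
  by rewrite /ncomp; apply: eq_card => x; rewrite !inE andbT.
rewrite -(card_in_imset (f := fingraph.root adj)); last first.
  move=> r1 r2; rewrite !inE => /eqP h1 /eqP h2 /(fingraph.rootP csym) /connect_troot.
  by rewrite !troot_id.
suff -> : [set fingraph.root adj x | x in RTset] = [set x | fingraph.roots adj x] by [].
apply/setP => x; rewrite inE; apply/imsetP/idP.
  by case=> r _ ->; exact: roots_root.
move=> /eqP hx; exists (troot p d x); first by rewrite inE d_troot.
rewrite -{1}hx; apply/(fingraph.rootP csym).
exact: troot_connect.
Qed.

Lemma card_NT : #|~: Tset| = (#|E| + ncomp ends - #|V|)%N.
Proof.
have h1 := cardsC Tset; have h2 := cardsC NRset.
have h3 : ~: NRset = RTset by apply/setP => v; rewrite !inE; case: (d v).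
rewrite h3 card_RT in h2; rewrite card_T in h1; lia.
Qed.

End Normal.
End Forest.

Unset Implicit Arguments.
Local Open Scope ring_scope.

Theorem proposition1 (R : realFieldType) (V E : finType) (ends : E -> V * V) :
  let L := (#|E| + ncomp ends - #|V|)%N in
  exists (o : E -> bool) (gamma : 'I_L -> seq E * seq V),
    [/\ (forall j, simple_cycle ends (gamma j).1 (gamma j).2),
        (forall j, directed_cycle ends o (gamma j).1 (gamma j).2),
        (* edge-indicator vectors of gamma_1..gamma_L (rows) are linearly independent in R^I *)
        row_free (\matrix_(j < L, k < #|E|)
                    (if enum_val k \in (gamma j).1 then 1 else 0) : 'M[R]_(L, #|E|)) &
        (* every conserved energy flow is parametrized by loop energies e_1..e_L *)
        forall f : E -> R, conserved ends o f ->
          exists en : 'I_L -> R,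
            forall i : E, f i = \sum_(j < L) (if i \in (gamma j).1 then 1 else 0) * en j].
Proof.
move=> L.
have [p [d [Hv Hn]]] := exists_normal ends.
have cardNT : #|~: Tset ends p d| = L := card_NT Hv Hn.
pose h (j : 'I_L) : E := enum_val (cast_ord (esym cardNT) j).
have hNT j : ~~ istree ends p d (h j).
  by have := enum_valP (cast_ord (esym cardNT) j); rewrite !inE.
have h_inj : injective h.
  by move=> j1 j2 /enum_val_inj /cast_ord_inj.
have h_surj e : ~~ istree ends p d e -> exists j, h j = e.
  move=> he; have he' : e \in ~: Tset ends p d by rewrite !inE.
  exists (cast_ord cardNT (enum_rank_in he' e)).
  by rewrite /h cast_ordK enum_rankK_in.
exists (o ends p d), (fun j => (cyc_es ends p d (h j), cyc_vs ends p d (h j))).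
split.
- move=> j /=; have := cyc_simple Hv Hn (hNT j); exact.
- move=> j /=; have := cyc_directed Hv Hn (hNT j); exact.
- apply/row_freeP; exists (\matrix_(k < #|E|, j < L) (if enum_val k == h j then 1 else 0 : R)).
  apply/matrixP => j j'; rewrite !mxE.
  under eq_bigr do rewrite !mxE.
  rewrite (bigD1 (enum_rank (h j'))) //= enum_rankK eqxx mulr1 big1 ?addr0.
    rewrite cyc_mem_nt // (inj_eq h_inj) eq_sym.
    by case: eqP.
  move=> k hk; case: eqP => [hk2|]; last by rewrite mulr0.
  by rewrite -hk2 enum_valK eqxx in hk.
- move=> f Hf; exists (fun j => f (h j)).
  pose g e := f e - \sum_(j < L) (if e \in cyc_es ends p d (h j) then 1 else 0) * f (h j).
  have aux (P : pred E) : \sum_(e | P e) \sum_(j < L) (if e \in cyc_es ends p d (h j) then 1 else 0) * f (h j)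
      = \sum_(j < L) (\sum_(e | P e) (if e \in cyc_es ends p d (h j) then 1 else 0 : R)) * f (h j).
    by rewrite exchange_big; apply: eq_bigr => j _; rewrite mulr_suml.
  have Hg : conserved ends (o ends p d) g.
    move=> v; rewrite /g !sumrB Hf !aux; congr (_ - _); apply: eq_bigr => j _.
    by rewrite (cyc_conserved R (cyc_simple Hv Hn (hNT j)) (cyc_directed Hv Hn (hNT j)) v).
  have Hz : forall e, ~~ istree ends p d e -> g e = 0.
    move=> e he; have [j0 hj0] := h_surj e he; rewrite /g (bigD1 j0) //= big1.
      by rewrite -hj0 cyc_mem_nt // eqxx mul1r addr0 subrr.
    move=> j hj; rewrite -hj0 cyc_mem_nt // (inj_eq h_inj) eq_sym (negbTE hj).
    by rewrite mul0r.
  move=> i; have := flow_zero Hv Hn Hg Hz i; rewrite /g => /eqP.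
  by rewrite subr_eq0 => /eqP.
Qed.
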